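(* Consider the robust multi-robot active target tracking problem and the algorithm RATT described in the context. Let $\mathbf{u}_{\mathcal{V},t}$ be the control inputs returned by RATT, let $(\mathcal{A}_s^\star,\mathcal{A}_c^\star)\in\arg\min_{\mathcal{A}_s\subseteq\mathcal{V},\,|\mathcal{A}_s|\le\alpha_s,\ \mathcal{A}_c\subseteq\mathcal{E},\,|\mathcal{A}_c|\le\alpha_c}\Phi(\mathcal{V}\setminus\mathcal{A}_s,\mathcal{E}\setminus\mathcal{A}_c)$ be a worst-case removal for these inputs, and let $\Phi^\star_{\mathcal{V},\alpha_s,\mathcal{E},\alpha_c}$ be the optimal value of the problem. Let $\alpha_{c,s}$ be the number computed by CAA$(N,\alpha_c)$. Then: 1) if $\Phi$ is non-decreasing and (without loss of generality) normalized and non-negative, then $$\frac{\Phi(\mathcal{V}\setminus\mathcal{A}_s^\star,\mathcal{E}\setminus\mathcal{A}_c^\star)}{\Phi^\star_{\mathcal{V},\alpha_s,\mathcal{E},\alpha_c}}\ \ge\ \min\Big[(1-c_\Phi)^3,\ \frac{(1-c_\Phi)^2}{\alpha_{c,s}}\Big];$$ 2) if, additionally, $\Phi$ is submodular, then $$\frac{\Phi(\mathcal{V}\setminus\mathcal{A}_s^\star,\mathcal{E}\setminus\mathcal{A}_c^\star)}{\Phi^\star_{\mathcal{V},\alpha_s,\mathcal{E},\alpha_c}}\ \ge\ \min\Big[\frac{1-k_\Phi}{1+k_\Phi},\ \frac{1-k_\Phi}{\alpha_{c,s}}\Big].$$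
   Context: Setting. There are $N$ robots $\mathcal{V}=\{1,\dots,N\}$; robot $i$ has dynamics $\mathbf{x}_{i,t+1}=f_i(\mathbf{x}_{i,t},\mathbf{u}_{i,t})$ with $\mathbf{u}_{i,t}$ chosen from a finite set $\mathcal{U}_i$; $\mathcal{U}_{\mathcal{V}}=\bigcup_i\mathcal{U}_i$. Robots track targets with noisy sensors and an extended Kalman filter; communication is modeled by the complete graph on $\mathcal{V}$ with edge set $\mathcal{E}$, $|\mathcal{E}|=N(N-1)/2$. For a choice of control inputs, a set $\mathcal{S}\subseteq\mathcal{V}$ of robots whose sensing is not attacked and a set $\mathcal{L}\subseteq\mathcal{E}$ of non-attacked links, the team tracking quality $\Phi(\mathcal{S},\mathcal{L})$ (one step ahead, a function of the filter's posterior covariance) is the maximum, over the connected components $C$ of the graph $(\mathcal{V},\mathcal{L})$, of the tracking quality obtained by fusing the measurements of the robots in $\mathcal{S}\cap C$ (robots with attacked sensing still relay messages). Without communication attacks, $\Phi(\mathcal{W})$ for $\mathcal{W}\subseteq\mathcal{V}$ denotes the quality from fusing the measurements of robots $\mathcal{W}$; $\Phi$ is regarded as a set function on the robots (with their chosen inputs). The problem (given $\alpha_s\le N$, $\alpha_c\le N(N-1)/2$) is $$\max_{\mathbf{u}_{\mathcal{V},t}\in\mathcal{U}_{\mathcal{V}}}\ \min_{\mathcal{A}_s\subseteq\mathcal{V},|\mathcal{A}_s|\le\alpha_s,\ \mathcal{A}_c\subseteq\mathcal{E},|\mathcal{A}_c|\le\alpha_c}\Phi(\mathcal{V}\setminus\mathcal{A}_s,\mathcal{E}\setminus\mathcal{A}_c),$$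 whose optimal value is $\Phi^\star_{\mathcal{V},\alpha_s,\mathcal{E},\alpha_c}$. CAA$(N,\alpha_c)$: set $e_r=N(N-1)/2-\alpha_c$; for $n=1,2,\dots,N$ in increasing order compute $q_n=\lfloor N/n\rfloor$, $r_n=N-nq_n$, $\bar e_n=q_n\frac{n(n-1)}{2}+\frac{r_n(r_n-1)}{2}$, and let $n_{\max}$ be the first $n$ with $e_r\le\bar e_n$; return $\alpha_{c,s}=N-n_{\max}$. RATT: compute $\alpha_{c,s}$ by CAA and set $\alpha=\alpha_s+\alpha_{c,s}$. If $\alpha<N$: for each robot $i$ compute $\max_{\mathbf{u}_i\in\mathcal{U}_i}\Phi(\{i\})$; let $\mathcal{V}_b$ be $\alpha$ robots with the largest such values (''bait'' robots), and give each the input attaining its individual maximum; then for the remaining robots run the standard greedy algorithm: starting from $\mathcal{V}_g=\emptyset$, repeatedly pick a not-yet-assigned robot $i'\notin\mathcal{V}_b\cup\mathcal{V}_g$ and an input for it maximizing the marginal gain $\Phi(\mathcal{V}_g\cup\{i'\})-\Phi(\mathcal{V}_g)$, and add $i'$ to $\mathcal{V}_g$, until all robots are assigned. If $\alpha\ge N$: give every robot the input maximizing its individual quality $\Phi(\{i\})$. Set-function notions, for $\phi:2^{\mathcal{X}}\to\mathbb{R}$ on finite $\mathcal{X}$: normalized if $\phi(\emptyset)=0$; non-decreasing if $\mathcal{Y}\subseteq\mathcal{Y}'$ implies $\phi(\mathcal{Y})\le\phi(\mathcal{Y}')$; submodular if $\phi(\mathcal{Y}\cup\{x\})-\phi(\mathcal{Y})\ge\phi(\mathcal{Y}'\cup\{x\})-\phi(\mathcal{Y}')$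 for $\mathcal{Y}\subseteq\mathcal{Y}'$. Curvature (non-decreasing submodular $\phi$ with $\phi(\{x\})\ne0$): $k_\phi=1-\min_{x\in\mathcal{X}}\frac{\phi(\mathcal{X})-\phi(\mathcal{X}\setminus\{x\})}{\phi(\{x\})}$. Total curvature (non-decreasing $\phi$): $c_\phi=1-\min_{x\in\mathcal{X}}\min_{\mathcal{Y},\mathcal{Y}'\subseteq\mathcal{X}\setminus\{x\}}\frac{\phi(\mathcal{Y}\cup\{x\})-\phi(\mathcal{Y})}{\phi(\mathcal{Y}'\cup\{x\})-\phi(\mathcal{Y}')}$. *)

(* Defs.v *)
From HB Require Import structures.
From mathcomp Require Import all_boot all_order all_algebra.
Set Implicit Arguments. Unset Strict Implicit. Unset Printing Implicit Defensive.
Import Order.TTheory GRing.Theory Num.Theory.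
Local Open Scope ring_scope.

(* Robots are 'I_N.  The ground set U_V of all (robot, control input) pairs is
   a finite type T; [owner x] is the robot to which the pair x belongs, so
   U_i = [set x | owner x == i].  Phi : {set T} -> R is the tracking quality
   as a set function on (robot, input) pairs. *)

Definition normalized (R : numDomainType) (T : finType) (phi : {set T} -> R) :=
  phi set0 = 0.
Definition nondecreasing_set (R : numDomainType) (T : finType)
  (phi : {set T} -> R) := forall A B : {set T}, A \subset B -> phi A <= phi B.
Definition nonnegative_set (R : numDomainType) (T : finType)
  (phi : {set T} -> R) := forall A : {set T}, 0 <= phi A.
Definition submodular (R : numDomainType) (T : finType) (phi : {set T} -> R) :=
  forall (A B : {set T}) (x : T), A \subset B ->
    phi (x |: B) - phi B <= phi (x |: A) - phi A.

Definition gain (R : numDomainType) (T : finType) (phi : {set T} -> R)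
  (Y : {set T}) (x : T) : R := phi (x |: Y) - phi Y.

(* Ratios with zero denominator are +oo (or 0/0) and are omitted from the min;
   the neutral element 1 is harmless since Y = Y' gives ratio 1. *)
Definition total_curvature (R : realFieldType) (T : finType)
  (phi : {set T} -> R) : R :=
  1 - \big[Num.min/1]_(x : T)
        \big[Num.min/1]_(Y : {set T} | Y \subset [set~ x])
          \big[Num.min/1]_(Y' : {set T} | (Y' \subset [set~ x])
                                        && (gain phi Y' x != 0))
             (gain phi Y x / gain phi Y' x).

(* curvature k_phi = 1 - min_x (phi X - phi (X\{x})) / phi {x}, over the x with
   phi {x} != 0 (neutral element 1 harmless: each ratio is <= 1 for
   submodular normalized phi). *)
Definition curvature (R : realFieldType) (T : finType)
  (phi : {set T} -> R) : R :=
  1 - \big[Num.min/1]_(x : T | phi [set x] != 0)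
        ((phi [set: T] - phi ([set: T] :\ x)) / phi [set x]).

(* edge set of the complete graph on 'I_N: unordered pairs {i,j}, i != j *)
Definition edges (N : nat) : {set {set 'I_N}} := [set e : {set 'I_N} | #|e| == 2%N].
Definition linked (N : nat) (L : {set {set 'I_N}}) : rel 'I_N :=
  fun i j => [set i; j] \in L.
Definition comp (N : nat) (L : {set {set 'I_N}}) (i : 'I_N) : {set 'I_N} :=
  [set j | connect (linked L) i j].

Definition valid_assignment (N : nat) (T : finType) (owner : T -> 'I_N)
  (sel : {ffun 'I_N -> T}) := forall i, owner (sel i) = i.

(* Phi(S, L) for the inputs sel: max over connected components C of (V, L)
   of the quality of fusing the measurements of robots S :&: C. *)
Definition PhiSL (R : realDomainType) (N : nat) (T : finType)
  (phi : {set T} -> R) (sel : {ffun 'I_N -> T})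
  (S : {set 'I_N}) (L : {set {set 'I_N}}) : R :=
  \big[Num.max/0]_(i : 'I_N) phi (sel @: (S :&: comp L i)).

Definition admissible (N : nat) (alpha_s alpha_c : nat)
  (As : {set 'I_N}) (Ac : {set {set 'I_N}}) :=
  [&& #|As| <= alpha_s, Ac \subset edges N & #|Ac| <= alpha_c]%N.

Definition worst_value (R : realDomainType) (N : nat) (T : finType)
  (phi : {set T} -> R) (alpha_s alpha_c : nat) (sel : {ffun 'I_N -> T}) : R :=
  \big[Num.min/PhiSL phi sel [set: 'I_N] (edges N)]_(As : {set 'I_N}
        | (#|As| <= alpha_s)%N)
    \big[Num.min/PhiSL phi sel [set: 'I_N] (edges N)]_(Ac : {set {set 'I_N}}
        | (Ac \subset edges N) && (#|Ac| <= alpha_c)%N)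
      PhiSL phi sel (~: As) (edges N :\: Ac).

Definition opt_value (R : realDomainType) (N : nat) (T : finType)
  (owner : T -> 'I_N) (phi : {set T} -> R) (alpha_s alpha_c : nat) : R :=
  \big[Num.max/0]_(sel : {ffun 'I_N -> T} | [forall i, owner (sel i) == i])
    worst_value phi alpha_s alpha_c sel.

Definition ebar (N n : nat) : nat :=
  let q := (N %/ n)%N in let r := (N - n * q)%N in
  (q * (n * (n - 1) %/ 2) + r * (r - 1) %/ 2)%N.
Definition CAA (N alpha_c : nat) : nat :=
  let e_r := (N * (N - 1) %/ 2 - alpha_c)%N in
  let n_max := (find (fun n => (e_r <= ebar N n)%N) (iota 1 N)).+1 in
  (N - n_max)%N.

Definition best_individual (R : realDomainType) (N : nat) (T : finType)
  (owner : T -> 'I_N) (phi : {set T} -> R) (sel : {ffun 'I_N -> T}) (i : 'I_N) :=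
  forall x, owner x = i -> phi [set x] <= phi [set sel i].

Definition RATT_output (R : realDomainType) (N : nat) (T : finType)
  (owner : T -> 'I_N) (phi : {set T} -> R) (alpha_s alpha_c : nat)
  (sel : {ffun 'I_N -> T}) : Prop :=
  let alpha := (alpha_s + CAA N alpha_c)%N in
  valid_assignment owner sel /\
  if (alpha < N)%N then
    exists (Vb : {set 'I_N}) (s : seq 'I_N),
      [/\ #|Vb| = alpha,
          (* bait robots: individual maxima, and the alpha largest ones *)
          (forall i, i \in Vb -> best_individual owner phi sel i),
          (forall i j x, i \in Vb -> j \notin Vb -> owner x = j ->
               phi [set x] <= phi [set sel i]),
          uniq s /\ (forall j, (j \in s) = (j \notin Vb)) &
          (forall s1 r s2, s = s1 ++ r :: s2 ->
             let G := sel @: [set j in s1] in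
             forall x, owner x \notin Vb -> owner x \notin s1 ->
               gain phi G x <= gain phi G (sel r))]
  else forall i, best_individual owner phi sel i.

(* min[a, b / n], where b / 0 is read as +oo *)
Definition min_bound (R : realFieldType) (a b : R) (n : nat) : R :=
  if n == 0%N then a else Num.min a (b / n%:R).

(* Main.v *)
Require Import Defs.
From HB Require Import structures.
From mathcomp Require Import all_boot all_order all_algebra.
From mathcomp Require Import zify ring lra.
Import Order.TTheory GRing.Theory Num.Theory.

Module Aux.
Set Implicit Arguments. Unset Strict Implicit. Unset Printing Implicit Defensive.

Lemma T2E n : (n * (n - 1) %/ 2 * 2 = n * (n - 1))%N.
Proof.
apply: divnK. case: n => [|n] //=. rewrite subSS subn0.
rewrite dvdn2 oddM /=; by case: (odd n).
Qed.

Lemma T2_super u s : (u * (u - 1) %/ 2 + s * (s - 1) %/ 2 <= (u + s) * (u + s - 1) %/ 2)%N.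
Proof.
rewrite -(leq_pmul2r (_ : 0 < 2)%N) // mulnDl !T2E.
case: u => [|u]; case: s => [|s]; rewrite ?addn0 ?add0n ?mul0n ?muln0 //.
rewrite !subn1 /= addSn /= addnS /=. nia.
Qed.

Lemma T2_maj u s p v : (u <= p)%N -> (s <= p)%N -> (u + s = p + v)%N ->
  (u * (u - 1) %/ 2 + s * (s - 1) %/ 2 <= p * (p - 1) %/ 2 + v * (v - 1) %/ 2)%N.
Proof.
move=> up sp e.
rewrite -(leq_pmul2r (_ : 0 < 2)%N) // !mulnDl !T2E.
have h : (v <= u)%N by lia.
have h' : (v <= s)%N by lia.
have -> : u = (v + (u - v))%N by lia.
have -> : s = (v + (s - v))%N by lia.
have -> : p = (v + (u - v) + (s - v))%N by lia.
move: (u - v)%N (s - v)%N => x y.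
case: v {e h h' up sp} => [|v].
  rewrite !add0n. case: x => [|x]; case: y => [|y]; rewrite ?addn0 ?add0n ?mul0n ?muln0 ?subn1 //=.
  rewrite addSn addnS /=. nia.
rewrite !subn1 !addSn /=. nia.
Qed.

Lemma ebar_step a s p : (0 < p)%N -> (s <= p)%N ->
  (ebar a p + s * (s - 1) %/ 2 <= ebar (a + s) p)%N.
Proof.
move=> p0 sp. rewrite /ebar.
have Ea := divn_eq a p. set q := a %/ p in Ea *. set u := a %% p in Ea *.
have up : (u < p)%N by rewrite ltn_mod.
have E1 : (a - p * q = u)%N by lia.
case: (ltnP (u + s) p) => h.
- have Eq : ((a + s) %/ p = q)%N.
    by rewrite Ea -addnA divnMDl // divn_small // addn0.
  rewrite Eq E1.
  have E2 : (a + s - p * q = u + s)%N by lia.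
  rewrite E2 -addnA leq_add2l. exact: T2_super.
- have Eq : ((a + s) %/ p = q.+1)%N.
    have -> : (a + s = q.+1 * p + (u + s - p))%N by lia.
    rewrite divnMDl // divn_small ?addn0 //. lia.
  rewrite Eq E1.
  have E2 : (a + s - p * q.+1 = u + s - p)%N by lia.
  rewrite E2 mulSn. have := @T2_maj u s p (u + s - p) (ltnW up) sp ltac:(lia). lia.
Qed.

Lemma ebar0 p : ebar 0 p = 0%N.
Proof. by rewrite /ebar div0n. Qed.

Lemma ebar_sum p (s : seq nat) : (0 < p)%N -> all (fun x => x <= p)%N s ->
  (\sum_(x <- s) (x * (x - 1) %/ 2) <= ebar (\sum_(x <- s) x) p)%N.
Proof.
move=> p0; elim: s => [|x s IH] /=; first by rewrite !big_nil ebar0.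
case/andP=> xp /IH h. rewrite !big_cons.
apply: leq_trans (_ : ebar (\sum_(j <- s) j) p + x * (x - 1) %/ 2 <= _)%N.
  by rewrite addnC leq_add2r.
by rewrite [(x + _)%N]addnC; apply: ebar_step.
Qed.

Lemma T2_split N n : (n <= N)%N ->
  (N * (N - 1) %/ 2 = n * (n - 1) %/ 2 + (N - n) * (N - n - 1) %/ 2 + n * (N - n))%N.
Proof.
move=> nN. apply/eqP. rewrite -(eqn_pmul2r (_ : 0 < 2)%N) // !mulnDl !T2E.
apply/eqP. have -> : N = (n + (N - n))%N by lia.
rewrite addKn. move: (N - n)%N => m.
case: n {nN} => [|n]; case: m => [|m]; rewrite ?addn0 ?add0n ?mul0n ?muln0 ?subn1 //=.
all: nia.
Qed.

Lemma ebar_two N n : (0 < n)%N -> (n <= N)%N ->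
  (ebar N n <= n * (n - 1) %/ 2 + (N - n) * (N - n - 1) %/ 2)%N.
Proof.
move=> n0 nN. rewrite /ebar.
have Ea := divn_eq N n. set q := N %/ n in Ea *. set u := N %% n in Ea *.
have q1 : (0 < q)%N by rewrite divn_gt0.
have E1 : (N - n * q = u)%N by lia.
rewrite E1.
have -> : (N - n = (q - 1) * n + u)%N.
  rewrite mulnBl mul1n. have : (n <= q * n)%N by rewrite leq_pmull. lia.
have : ((q - 1) * (n * (n - 1) %/ 2) + u * (u - 1) %/ 2 <= ((q - 1) * n + u) * ((q - 1) * n + u - 1) %/ 2)%N.
  move: (q - 1)%N => k. elim: k => [|k IH]; first by rewrite !mul0n add0n.
  apply: leq_trans (_ : (n * (n - 1) %/ 2 + ((k * n + u) * (k * n + u - 1) %/ 2)) <= _)%N.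
    by rewrite mulSn -addnA leq_add2l.
  have -> : (k.+1 * n + u = n + (k * n + u))%N by rewrite mulSn addnA.
  exact: T2_super.
have -> : (q = (q - 1).+1)%N by lia.
rewrite mulSn subSS subn0. lia.
Qed.

Lemma ebarNN N : (0 < N)%N -> ebar N N = (N * (N - 1) %/ 2)%N.
Proof. move=> N0; rewrite /ebar divnn N0 muln1 subnn mul1n. by rewrite mul0n div0n addn0. Qed.

Lemma CAA_spec N ac : (0 < N)%N -> (ac <= N * (N - 1) %/ 2)%N ->
  exists n, [/\ (0 < n <= N)%N, (N * (N - 1) %/ 2 - ac <= ebar N n)%N,
     (forall p, 0 < p < n -> N * (N - 1) %/ 2 - ac > ebar N p)%N &
     CAA N ac = (N - n)%N].
Proof.
move=> N0 acle.
set er := (N * (N - 1) %/ 2 - ac)%N.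
set a := (fun n => er <= ebar N n)%N.
have hs : has a (iota 1 N).
  apply/hasP; exists N; first by rewrite mem_iota; lia.
  by rewrite /a ebarNN // /er leq_subr.
have fl : (find a (iota 1 N) < N)%N by move: hs; rewrite has_find size_iota.
exists (find a (iota 1 N)).+1; split.
- lia.
- have := nth_find 0%N hs. by rewrite nth_iota // add1n.
- move=> p /andP[p0 pl].
  have := before_find 0%N (_ : p.-1 < find a (iota 1 N))%N.
  move=> /(_ ltac:(lia)). rewrite nth_iota; last by lia.
  rewrite /a. have -> : (1 + p.-1 = p)%N by lia. by move/negbT; rewrite -ltnNge.
- by [].
Qed.

Lemma CAA_cut N ac : (ac <= N * (N - 1) %/ 2)%N ->
  (CAA N ac * (N - CAA N ac) <= ac)%N.
Proof.
case: N => [|N']; first by rewrite /CAA.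
set N := N'.+1 => acle.
have [n [/andP[n0 nN] h1 _ ->]] := @CAA_spec N ac (ltn0Sn N') acle.
have h2 := ebar_two n0 nN.
have h3 := T2_split nN.
have -> : (N - (N - n) = n)%N by lia.
lia.
Qed.

Lemma card_bigcup_le (I T : finType) (P : {pred I}) (F : I -> {set T}) :
  (#|\bigcup_(i in P) F i| <= \sum_(i in P) #|F i|)%N.
Proof.
apply: (big_ind2 (fun (A : {set T}) n => #|A| <= n)%N) => //.
- by rewrite cards0.
- move=> A n B m hA hB. apply: leq_trans (leq_card_setU A B).1 _. exact: leq_add.
Qed.

Lemma linked_sym N (L : {set {set 'I_N}}) : symmetric (linked L).
Proof. by move=> i j; rewrite /linked setUC. Qed.

Lemma comp_big N (L : {set {set 'I_N}}) p : (0 < p)%N -> L \subset edges N ->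
  (forall i, #|Defs.comp L i| <= p)%N -> (#|L| <= ebar N p)%N.
Proof.
move=> p0 LE hc.
set R := fun i j => connect (linked L) i j.
have eqR : {in [set: 'I_N] & &, equivalence_rel R}.
  move=> x y z _ _ _; split; first exact: connect0.
  move=> Rxy. apply/idP/idP => H.
    by apply: connect_trans H; rewrite (sym_connect_sym (@linked_sym N L)).
  exact: connect_trans Rxy H.
set P := equivalence_partition R [set: 'I_N].
have hP := equivalence_partitionP eqR.
have Pcomp : forall C, C \in P -> exists x, C = Defs.comp L x.
  move=> C /imsetP[x _ ->]; exists x; apply/setP => y; by rewrite !inE.
have compP : forall x, Defs.comp L x \in P.
  move=> x; apply/imsetP; exists x => //; apply/setP => y; by rewrite !inE.
have sub : L \subset \bigcup_(C in P) [set e : {set 'I_N} | e \subset C & #|e| == 2%N].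
  apply/subsetP => e eL. have := subsetP LE e eL. rewrite inE => /cards2P[x [y [xy ee]]].
  apply/bigcupP; exists (Defs.comp L x) => //. rewrite inE ee cards2 xy andbT.
  rewrite subUset !sub1set !inE connect0 /=. apply: connect1. by rewrite /linked -ee.
have h1 := subset_leq_card sub.
have h2 := card_bigcup_le P (fun C => [set e : {set 'I_N} | e \subset C & #|e| == 2%N]).
have h3 : (\sum_(C in P) #|[set e : {set 'I_N} | e \subset C & #|e| == 2%N]|
            = \sum_(C in P) (#|C| * (#|C| - 1) %/ 2))%N.
  apply: eq_bigr => C _. by rewrite cards_draws bin2 -divn2 subn1.
have h4 : (\sum_(C in P) (#|C| * (#|C| - 1) %/ 2) <= ebar (\sum_(C in P) #|C|) p)%N.
  rewrite -!big_enum.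
  have := @ebar_sum p [seq #|C| | C : {set 'I_N} <- enum P] p0.
  rewrite !big_map. apply. apply/allP => x /mapP[C CP ->].
  rewrite mem_enum in CP. by have [y ->] := Pcomp C CP.
have h5 : (\sum_(C in P) #|C| = N)%N.
  by rewrite -(card_partition hP) cardsT card_ord.
rewrite h5 in h4. rewrite h3 in h2. exact: leq_trans h1 (leq_trans h2 h4).
Qed.

Lemma card_edges N : #|edges N| = (N * (N - 1) %/ 2)%N.
Proof. by rewrite /edges card_draws card_ord bin2 -divn2 subn1. Qed.

Lemma big_component N ac (Ac : {set {set 'I_N}}) : (0 < N)%N ->
  (ac <= N * (N - 1) %/ 2)%N -> (#|Ac| <= ac)%N ->
  exists i, (N - CAA N ac <= #|Defs.comp (edges N :\: Ac) i|)%N.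
Proof.
move=> N0 acle Acc.
have [n [/andP[n0 nN] h1 h2 ->]] := @CAA_spec N ac N0 acle.
have -> : (N - (N - n) = n)%N by lia.
case: (boolP [exists i, n <= #|Defs.comp (edges N :\: Ac) i|]%N).
  by move/existsP.
rewrite negb_exists => /forallP hall.
have hc : forall i, (#|Defs.comp (edges N :\: Ac) i| <= n.-1)%N.
  by move=> i; have := hall i; rewrite -ltnNge; lia.
case: n n0 {nN h1} h2 hc {hall} => [|[|p]] //= _ h2 hc.
  by have := hc (Ordinal N0); rewrite leqn0 cards_eq0 => /eqP/setP/(_ (Ordinal N0)); rewrite !inE connect0.
have := comp_big (ltn0Sn p) (subsetDl _ _) hc.
have := h2 p.+1 ltac:(lia).
have : (#|edges N| <= #|edges N :\: Ac| + #|Ac|)%N.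
  rewrite -(cardsID Ac (edges N)) addnC leq_add2l. apply: subset_leq_card. exact: subsetIr.
rewrite card_edges. lia.
Qed.

Local Open Scope ring_scope.

Section Gen.
Variables (R : realFieldType) (T : finType) (f : {set T} -> R).
Hypothesis f0 : normalized f.
Hypothesis fmono : nondecreasing_set f.
Hypothesis fnn : nonnegative_set f.

Lemma gain_ge0 Z y : 0 <= gain f Z y.
Proof. by rewrite /gain subr_ge0; apply: fmono; apply: subsetUr. Qed.

Lemma gainE Z y : f (y |: Z) = f Z + gain f Z y.
Proof. by rewrite /gain addrC subrK. Qed.

Lemma low_chain (g : T -> R) : (forall (Z : {set T}) y, y \notin Z -> g y <= gain f Z y) ->
  forall Y X : {set T}, [disjoint X & Y] -> f X + \sum_(y in Y) g y <= f (X :|: Y).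
Proof.
move=> hg Y. have [n hn] := ubnP #|Y|. elim: n Y hn => [|n IH] Y // hY X dXY.
case: (set_0Vmem Y) => [->|[y yY]]; first by rewrite big_set0 setU0 addr0.
rewrite (big_setD1 y yY) /=.
have -> : X :|: Y = y |: (X :|: Y :\ y) by rewrite setUCA setD1K.
rewrite gainE.
have dX : [disjoint X & Y :\ y].
  by apply: disjointWr dXY; apply: subsetDl.
have := IH (Y :\ y) _ X dX.
have -> : #|Y :\ y| = #|Y|.-1 by rewrite (cardsD1 y Y) yY.
move=> /(_ ltac:(move: hY; rewrite (cardsD1 y Y) yY /=; lia)) h.
have yZ : y \notin X :|: Y :\ y.
  rewrite in_setU in_setD1 eqxx /= orbF. apply/negP => yX. by move: (disjointFr dXY yX); rewrite yY.
have := hg _ _ yZ. lra.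
Qed.

Lemma up_chain (h : T -> R) : (forall (Z : {set T}) y, y \notin Z -> gain f Z y <= h y) ->
  forall Y X : {set T}, [disjoint X & Y] -> f (X :|: Y) <= f X + \sum_(y in Y) h y.
Proof.
move=> hg Y. have [n hn] := ubnP #|Y|. elim: n Y hn => [|n IH] Y // hY X dXY.
case: (set_0Vmem Y) => [->|[y yY]]; first by rewrite big_set0 setU0 addr0.
rewrite (big_setD1 y yY) /=.
have -> : X :|: Y = y |: (X :|: Y :\ y) by rewrite setUCA setD1K.
rewrite gainE.
have dX : [disjoint X & Y :\ y].
  by apply: disjointWr dXY; apply: subsetDl.
have := IH (Y :\ y) _ X dX.
move=> /(_ ltac:(move: hY; rewrite (cardsD1 y Y) yY /=; lia)) h'.
have yZ : y \notin X :|: Y :\ y.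
  rewrite in_setU in_setD1 eqxx /= orbF. apply/negP => yX. by move: (disjointFr dXY yX); rewrite yY.
have := hg _ _ yZ. lra.
Qed.

End Gen.

Section Helpers.
Variable R : realFieldType.

Lemma bigmax_ub (I : finType) (F : I -> R) i :
  F i <= \big[Num.max/0]_(j : I) F j.
Proof. by rewrite (bigD1 i) //= le_max lexx. Qed.

Lemma bigmax_ge0 (I : finType) (F : I -> R) (P : pred I) :
  0 <= \big[Num.max/0]_(j | P j) F j.
Proof. by apply: (big_rec (fun x => 0 <= x)) => // i x _ hx; rewrite le_max hx orbT. Qed.

Lemma bigmax_bnd (I : finType) (P : pred I) (F : I -> R) (b W : R) :
  0 <= b -> 0 <= W -> (forall i, P i -> b * F i <= W) ->
  b * \big[Num.max/0]_(j | P j) F j <= W.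
Proof.
move=> b0 W0 h. apply: (big_ind (fun x => b * x <= W)) => //.
- by rewrite mulr0.
- move=> x y hx hy. by case: (leP x y).
Qed.

Lemma bigmin_lb (I : finType) (P : pred I) (F : I -> R) (x0 : R) i :
  P i -> \big[Num.min/x0]_(j | P j) F j <= F i.
Proof. by move=> Pi; rewrite (bigD1 i) //= ge_min lexx. Qed.

Lemma bigmin_glb (I : finType) (P : pred I) (F : I -> R) (x0 c : R) :
  c <= x0 -> (forall i, P i -> c <= F i) -> c <= \big[Num.min/x0]_(j | P j) F j.
Proof.
move=> h0 h. apply: (big_ind (fun x => c <= x)) => // x y hx hy.
by rewrite le_min hx hy.
Qed.

Lemma sum_dom (I : finType) (A B : {set I}) (u v : I -> R) :
  (#|A| <= #|B|)%N -> (forall i j, i \in A -> j \in B -> u i <= v j) ->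
  (forall j, j \in B -> 0 <= v j) ->
  \sum_(i in A) u i <= \sum_(j in B) v j.
Proof.
move=> cAB huv hv.
case: (set_0Vmem B) => [B0|[j0 j0B]].
  move: cAB; rewrite B0 cards0 leqn0 cards_eq0 => /eqP ->.
  by rewrite !big_set0.
set mu := \big[Num.min/v j0]_(j in B) v j.
have mu_le : forall j, j \in B -> mu <= v j by move=> j jB; apply: bigmin_lb.
have mu0 : 0 <= mu by apply: bigmin_glb => //; apply: hv.
have umu : forall i, i \in A -> u i <= mu.
  by move=> i iA; apply: bigmin_glb => [|j jB]; apply: huv.
have h1 : \sum_(i in A) u i <= \sum_(i in A) mu by apply: ler_sum.
have h2 : \sum_(j in B) mu <= \sum_(j in B) v j by apply: ler_sum.
have h3 : \sum_(i in A) mu <= \sum_(j in B) mu.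
  rewrite !sumr_const -[mu *+ #|A|]mulr_natl -[mu *+ #|B|]mulr_natl.
  apply: ler_wpM2r => //. by rewrite ler_nat.
exact: le_trans h1 (le_trans h3 h2).
Qed.

End Helpers.

Lemma exists_sub (I : finType) (A : {set I}) k : (k <= #|A|)%N ->
  exists B : {set I}, B \subset A /\ #|B| = k.
Proof.
elim: k => [|k IH] hk; first by exists set0; rewrite sub0set cards0.
have [B [BA cB]] := IH (ltnW hk).
have : ~~ (A \subset B).
  apply/negP => AB. have := subset_leq_card AB. rewrite cB. lia.
case/subsetPn => x xA xB.
exists (x |: B); split; first by rewrite subUset sub1set xA BA.
by rewrite cardsU1 xB cB.
Qed.

Lemma disjoint_imset (aT rT : finType) (g : aT -> rT) (A B : {set aT}) :
  injective g -> [disjoint A & B] -> [disjoint g @: A & g @: B].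
Proof.
move=> ig dAB. rewrite -setI_eq0 -imsetI; last by move=> x y _ _; apply: ig.
by move: dAB; rewrite -setI_eq0 => /eqP ->; rewrite imset0.
Qed.

Lemma worst_le (R : realFieldType) N (T : finType) (f : {set T} -> R) a_s a_c
  (O : {ffun 'I_N -> T}) As' Ac' :
  admissible a_s a_c As' Ac' ->
  worst_value f a_s a_c O <= PhiSL f O (~: As') (edges N :\: Ac').
Proof.
case/and3P=> h1 h2 h3. rewrite /worst_value.
rewrite (bigD1 As') //= ge_min; apply/orP; left.
rewrite (bigD1 Ac') /=; last by rewrite h2 h3.
by rewrite ge_min lexx.
Qed.

Lemma arith1 (x1 x2 x3 x4 x5 x6 N a s : nat) : (x1 + x2 = x3 -> x4 + x1 = x5 -> x3 = N - x6 ->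
  N - a - s <= x6 -> x5 = s + a -> s + a < N -> x2 <= x4)%N.
Proof. lia. Qed.

Lemma arith2 (y1 y2 y3 y4 s N a : nat) : (y1 + y2 = y3 -> y1 <= y4 -> y4 <= s -> N - a <= y3 -> N - a - s <= y2)%N.
Proof. lia. Qed.

Lemma arithR (R : realFieldType) (lo hi P g2 s1 s2 fS W : R) : 0 <= lo -> lo <= hi -> 0 < hi ->
  g2 + lo * s2 <= fS -> P <= g2 + hi * s1 -> s1 <= s2 -> 0 <= g2 -> 0 <= s1 -> fS <= W ->
  lo * P <= hi * W.
Proof.
move=> lo0 lohi hi0 hl hu hs g0 s0 hW.
have hi0' : 0 <= hi by apply: ltW.
have e1 : lo * P <= lo * (g2 + hi * s1) by apply: ler_wpM2l.
have e2 : (lo * hi) * s1 <= (lo * hi) * s2 by apply: ler_wpM2l => //; apply: mulr_ge0.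
have e3 : hi * (g2 + lo * s2) <= hi * fS by apply: ler_wpM2l.
have e4 : hi * fS <= hi * W by apply: ler_wpM2l.
have e5 : lo * g2 <= hi * g2 by apply: ler_wpM2r.
nra.
Qed.

Lemma arithR2 (R : realFieldType) (b hi gam lo fO fP W : R) : 0 <= b -> 0 < hi ->
  b * hi * gam <= lo -> lo * fP <= hi * W -> fO <= gam * fP -> 0 <= fP -> b * fO <= W.
Proof.
move=> b0 hi0 bg hA hG fP0.
have e1 : b * fO <= b * (gam * fP) by apply: ler_wpM2l.
have e2 : (b * hi * gam) * fP <= lo * fP by apply: ler_wpM2r.
have e3 : hi * (b * (gam * fP)) <= hi * W.
  apply: le_trans hA. apply: le_trans e2. rewrite !mulrA. by rewrite [hi * b]mulrC.
have e4 : b * (gam * fP) <= W.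
  by rewrite -(ler_pM2l hi0).
exact: le_trans e1 e4.
Qed.

Lemma arith3 (x y z s a : nat) : (x + y = z -> x <= s -> z = s + a -> a <= y)%N.
Proof. lia. Qed.

Lemma arith4 (x y z s a : nat) : (x + y = z -> x = a -> z = s + a -> y = s)%N.
Proof. lia. Qed.

Section Core.
Variables (R : realFieldType) (N : nat) (T : finType) (owner : T -> 'I_N)
  (f : {set T} -> R) (alpha_s alpha_c : nat) (sel : {ffun 'I_N -> T})
  (As : {set 'I_N}) (Ac : {set {set 'I_N}}).
Hypothesis has_s : (alpha_s <= N)%N.
Hypothesis has_c : (alpha_c <= N * (N - 1) %/ 2)%N.
Hypothesis hR : RATT_output owner f alpha_s alpha_c sel.
Hypothesis hadm : admissible alpha_s alpha_c As Ac.
Hypothesis f0 : normalized f.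
Hypothesis fmono : nondecreasing_set f.
Hypothesis fnn : nonnegative_set f.
Variables (lo hi gam b : R).
Hypothesis lo0 : 0 <= lo.
Hypothesis lohi : lo <= hi.
Hypothesis hi0 : 0 < hi.
Hypothesis b0 : 0 <= b.
Hypothesis bgam : b * hi * gam <= lo.
Hypothesis bcaa : b * hi * (CAA N alpha_c)%:R <= 1.
Hypothesis hlo : forall (Z : {set T}) y, y \notin Z -> lo * f [set y] <= gain f Z y.
Hypothesis hhi : forall (Z : {set T}) y, y \notin Z -> gain f Z y <= hi * f [set y].
Hypothesis hgreedy : forall (Vb : {set 'I_N}) (s : seq 'I_N),
  uniq s -> (forall j, (j \in s) = (j \notin Vb)) ->
  (forall s1 r s2, s = s1 ++ r :: s2 ->
             let G := sel @: [set j in s1] in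
             forall x, owner x \notin Vb -> owner x \notin s1 ->
               gain f G x <= gain f G (sel r)) ->
  forall O : {ffun 'I_N -> T}, (forall i, owner (O i) = i) ->
  f (O @: ~: Vb) <= gam * f (sel @: ~: Vb).

Let W := PhiSL f sel (~: As) (edges N :\: Ac).
Let a := CAA N alpha_c.

Lemma W0 : 0 <= W.
Proof. exact: bigmax_ge0. Qed.

Lemma Wi i : f (sel @: (~: As :&: Defs.comp (edges N :\: Ac) i)) <= W.
Proof. exact: (bigmax_ub (fun i => f (sel @: (~: As :&: Defs.comp (edges N :\: Ac) i))) i). Qed.

Lemma Wj j : j \notin As -> f [set sel j] <= W.
Proof.
move=> jA. apply: le_trans (Wi j). apply: fmono.
rewrite sub1set; apply: imset_f. by rewrite !inE jA connect0.
Qed.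

Lemma inj_valid (O : {ffun 'I_N -> T}) : (forall i, owner (O i) = i) -> injective O.
Proof. by move=> h; apply: (can_inj h). Qed.

Lemma f_img_up (O : {ffun 'I_N -> T}) (A : {set 'I_N}) :
  (forall i, owner (O i) = i) -> f (O @: A) <= hi * \sum_(i in A) f [set O i].
Proof.
move=> hO. have := up_chain (h := fun y => hi * f [set y]) (X := set0) (Y := O @: A) hhi ltac:(by rewrite -setI_eq0 set0I).
rewrite set0U f0 add0r -mulr_sumr big_imset //.
by move=> x y _ _; apply: inj_valid.
Qed.

Lemma term_bound (O : {ffun 'I_N -> T}) (A : {set 'I_N}) :
  (forall i, owner (O i) = i) -> (#|A| <= a)%N ->
  (forall i, i \in A -> f [set O i] <= W) -> b * f (O @: A) <= W.
Proof.
move=> hO cA hA.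
have h1 := f_img_up A hO.
have h2 : \sum_(i in A) f [set O i] <= #|A|%:R * W.
  apply: le_trans (_ : \sum_(i in A) W <= _); first by apply: ler_sum.
  by rewrite sumr_const mulr_natl.
have h3 : (#|A|%:R : R) <= a%:R by rewrite ler_nat.
have W0' := W0.
have fA0 : 0 <= f (O @: A) := fnn _.
have cnn : 0 <= (#|A|%:R : R) by [].
have : b * hi * #|A|%:R <= 1.
  apply: le_trans bcaa. apply: ler_wpM2l => //. by apply: mulr_ge0 => //; apply: ltW.
move=> h4.
have : b * f (O @: A) <= b * (hi * (#|A|%:R * W)).
  apply: ler_wpM2l => //. apply: le_trans h1 _. apply: ler_wpM2l => //; exact: ltW.
move=> h5. apply: le_trans h5 _.
rewrite mulrA mulrA -[X in _ <= X]mul1r. by apply: ler_wpM2r.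
Qed.


Lemma cardC_ord (A : {set 'I_N}) : #|~: A| = (N - #|A|)%N.
Proof. have := cardsC A; rewrite card_ord; lia. Qed.

Lemma core_big : ~~ (alpha_s + a < N)%N -> b * opt_value owner f alpha_s alpha_c <= W.
Proof.
move=> hα. rewrite /opt_value. apply: bigmax_bnd => // [|O /forallP hO'].
  exact: W0.
have hO : forall i, owner (O i) = i by move=> i; apply/eqP.
case: hR => hsel. rewrite /= -/a (negbTE hα) => hbest.
case/and3P: hadm => cAs _ _.
have : (alpha_s - #|As| <= #|~: As|)%N by rewrite cardC_ord; lia.
case/exists_sub => D [DC cD].
set As' := As :|: D.
have cAs' : #|As'| = alpha_s.
  rewrite /As' cardsU cD.
  have -> : As :&: D = set0.
    apply/setP => x; rewrite !inE. case xA: (x \in As) => //=.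
    apply/negP => xD. by have := subsetP DC x xD; rewrite inE xA.
  rewrite cards0. lia.
have adm : admissible alpha_s alpha_c As' set0.
  by rewrite /admissible cAs' leqnn sub0set cards0.
apply: le_trans (ler_wpM2l b0 (worst_le f O adm)) _.
apply: bigmax_bnd => // [|i _]; first exact: W0.
apply: le_trans (_ : b * f (O @: ~: As') <= _).
  apply: ler_wpM2l => //. apply: fmono. apply: imsetS. exact: subsetIl.
apply: term_bound => //.
  rewrite cardC_ord cAs'. lia.
move=> j. rewrite /As' !inE negb_or => /andP[jA _].
apply: le_trans (Wj jA). exact: hbest.
Qed.


Lemma stepA (Vb : {set 'I_N}) : (#|Vb| = alpha_s + a)%N -> (alpha_s + a < N)%N ->
  (forall i j x, i \in Vb -> j \notin Vb -> owner x = j -> f [set x] <= f [set sel i]) ->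
  (forall i, owner (sel i) = i) ->
  lo * f (sel @: ~: Vb) <= hi * W.
Proof.
move=> cVb hα hdom hsel.
have N0 : (0 < N)%N by lia.
case/and3P: hadm => cAs _ cAc.
have [i0 hC] := big_component N0 has_c cAc.
set C := Defs.comp (edges N :\: Ac) i0 in hC.
set S := ~: As :&: C.
have hWS : f (sel @: S) <= W by apply: Wi.
have cS : (N - a - alpha_s <= #|S|)%N.
  have := cardsID As C.
  have -> : C :\: As = S by rewrite /S setDE setIC.
  have : (#|C :&: As| <= #|As|)%N by apply: subset_leq_card; apply: subsetIr.
  move=> h1 h2; exact: arith2 h2 h1 cAs hC.
clearbody S.
set G2 := S :\: Vb. set B2 := S :&: Vb. set G1 := ~: Vb :\: S.
have injsel : injective sel by apply: inj_valid.
have eS : sel @: S = sel @: G2 :|: sel @: B2 by rewrite -imsetU /G2 /B2 setUC setID.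
have eP : sel @: (~: Vb) = sel @: G2 :|: sel @: G1.
  have eVb : ~: Vb = G2 :|: G1.
    apply/setP => j; rewrite /G2 /G1 !inE.
    by case: (j \in Vb); case: (j \in S); rewrite ?andbF ?andbT.
  by rewrite -imsetU eVb.
have dG2B2 : [disjoint G2 & B2].
  rewrite -setI_eq0; apply/eqP/setP => j; rewrite /G2 /B2 !inE.
  by case: (j \in Vb); rewrite ?andbF ?andbT.
have dG2G1 : [disjoint G2 & G1].
  rewrite -setI_eq0; apply/eqP/setP => j; rewrite /G2 /G1 !inE.
  by case: (j \in S); case: (j \in Vb); rewrite ?andbF ?andbT ?andFb.
have hlow := low_chain (g := fun y => lo * f [set y]) hlo (disjoint_imset injsel dG2B2).
have hup := up_chain (h := fun y => hi * f [set y]) hhi (disjoint_imset injsel dG2G1).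
rewrite -eS in hlow. rewrite -eP in hup.
rewrite -mulr_sumr big_imset /= in hlow; last by move=> x y _ _; apply: injsel.
rewrite -mulr_sumr big_imset /= in hup; last by move=> x y _ _; apply: injsel.
have cG1 : (#|G1| <= #|B2|)%N.
  have h1 := cardsID Vb (~: S).
  have e1 : ~: S :\: Vb = G1.
    apply/setP => j; rewrite /G1 !inE. by rewrite andbC.
  rewrite e1 in h1.
  have h2 := cardsID S Vb.
  have e2 : Vb :&: S = B2 by rewrite /B2 setIC.
  have e3 : Vb :\: S = ~: S :&: Vb by rewrite setDE setIC.
  rewrite e2 e3 in h2.
  have h3 := cardC_ord S.
  exact: arith1 h1 h2 h3 cS cVb hα.
have hsum : \sum_(j in G1) f [set sel j] <= \sum_(j in B2) f [set sel j].
  apply: sum_dom; first exact: cG1; last by move=> j _; apply: fnn.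
  move=> i j iG jB.
  apply: (hdom j i (sel i)); last exact: hsel.
    by move: jB; rewrite /B2 inE => /andP[].
  by move: iG; rewrite /G1 !inE => /andP[].
have fG2 : 0 <= f (sel @: G2) := fnn _.
have s1 : 0 <= \sum_(j in G1) f [set sel j] by apply: sumr_ge0 => j _; apply: fnn.
exact: arithR lo0 lohi hi0 hlow hup hsum fG2 s1 hWS.
Qed.


Lemma core_small : (alpha_s + a < N)%N -> b * opt_value owner f alpha_s alpha_c <= W.
Proof.
move=> hα. rewrite /opt_value. apply: bigmax_bnd => // [|O /forallP hO'].
  exact: W0.
have hO : forall i, owner (O i) = i by move=> i; apply/eqP.
case: hR => hsel. rewrite /= -/a hα => -[Vb [s [cVb hbest hdom [us hs] hg]]].
case/and3P: hadm => cAs _ cAc.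
have hmain : b * f (O @: ~: Vb) <= W.
  have hA := stepA cVb hα hdom hsel.
  have hG := hgreedy us hs hg hO.
  have fP : 0 <= f (sel @: ~: Vb) := fnn _.
  exact: arithR2 b0 hi0 bgam hA hG fP.
have : (a <= #|Vb :\: As|)%N.
  have h1 := cardsID As Vb.
  have h2 : (#|Vb :&: As| <= #|As|)%N by apply: subset_leq_card; apply: subsetIr.
  exact: arith3 h1 (leq_trans h2 cAs) cVb.
case/exists_sub => B2 [B2sub cB2].
have B2Vb : B2 \subset Vb by apply: subset_trans B2sub (subsetDl _ _).
set X := ~: B2. set As' := Vb :\: B2.
set Ac' := [set e in edges N | ~~ (e \subset X) && ~~ (e \subset B2)].
have cAs' : #|As'| = alpha_s.
  have h1 := cardsID B2 Vb. rewrite (setIidPr B2Vb) in h1.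
  exact: arith4 h1 cB2 cVb.
have cAc' : (#|Ac'| <= alpha_c)%N.
  apply: leq_trans (_ : #|[set [set p.1; p.2] | p in setX X B2]| <= _)%N.
    apply: subset_leq_card. apply/subsetP => e. rewrite inE => /andP[eE /andP[nX nB]].
    move: eE; rewrite inE => /cards2P[x [y [xy ee]]].
    move: nX nB; rewrite ee !subUset !sub1set /X !inE.
    case xB: (x \in B2); case yB: (y \in B2) => //= _ _; apply/imsetP.
      by exists (y, x); rewrite ?inE ?xB ?yB // setUC.
    by exists (x, y); rewrite ?inE ?xB ?yB.
  apply: leq_trans (leq_imset_card _ _) _. rewrite cardsX cardC_ord cB2 mulnC.
  exact: CAA_cut.
have adm : admissible alpha_s alpha_c As' Ac'.
  rewrite /admissible cAs' leqnn cAc' andbT /=.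
  apply/subsetP => e; rewrite inE => /andP[].
  by [].
apply: le_trans (ler_wpM2l b0 (worst_le f O adm)) _.
apply: bigmax_bnd => // [|i _]; first exact: W0.
have hcl : forall j, connect (linked (edges N :\: Ac')) i j -> (i \in X) = (j \in X).
  apply: closed_connect. move=> u v. rewrite /linked !inE => /andP[nAc eE].
  move: nAc. rewrite eE /= negb_and !negbK !subUset !sub1set.
  by case/orP => /andP[hu hv]; move: hu hv; rewrite /X ?inE => -> ->.
case iX: (i \in X).
  apply: le_trans hmain. apply: ler_wpM2l => //. apply: fmono. apply: imsetS.
  apply/subsetP => j. rewrite !inE => /andP[jAs' jc].
  have := hcl j jc. rewrite iX /X inE => /esym jB.
  move: jAs'. rewrite ?inE jB /=. by [].
apply: term_bound => //.
  rewrite -cB2. apply: subset_leq_card. apply/subsetP => j. rewrite !inE => /andP[_ jc].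
  have := hcl j jc. by rewrite iX /X inE => /esym/negbFE.
move=> j. rewrite !inE => /andP[_ jc].
have := hcl j jc. rewrite iX /X inE => /esym/negbFE jB.
have jVA := subsetP B2sub j jB. move: jVA; rewrite inE => /andP[jA jV].
apply: le_trans (Wj jA). exact: hbest.
Qed.

Lemma core : b * opt_value owner f alpha_s alpha_c <= W.
Proof. by case: (ltnP (alpha_s + a) N) => h; [apply: core_small | apply: core_big; rewrite -leqNgt]. Qed.

End Core.


Section Greedy.
Variables (R : realFieldType) (N : nat) (T : finType) (owner : T -> 'I_N)
  (f : {set T} -> R) (sel O : {ffun 'I_N -> T}) (Vb : {set 'I_N}) (s : seq 'I_N).
Hypothesis f0 : normalized f.
Hypothesis fmono : nondecreasing_set f.
Hypothesis hsel : forall i, owner (sel i) = i.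
Hypothesis hO : forall i, owner (O i) = i.
Hypothesis us : uniq s.
Hypothesis hs : forall j, (j \in s) = (j \notin Vb).
Hypothesis hg : forall s1 r s2, s = s1 ++ r :: s2 ->
             let G := sel @: [set j in s1] in
             forall x, owner x \notin Vb -> owner x \notin s1 ->
               gain f G x <= gain f G (sel r).

Lemma owner_img (g : {ffun 'I_N -> T}) (A : {set 'I_N}) x :
  (forall i, owner (g i) = i) -> x \in g @: A -> owner x \in A.
Proof. by move=> hgv /imsetP[j jA ->]; rewrite hgv. Qed.

Lemma set_rcons (l : seq 'I_N) r : [set j in rcons l r] = r |: [set j in l].
Proof. by apply/setP => j; rewrite !inE mem_rcons in_cons. Qed.

Lemma set_s : [set j in s] = ~: Vb.
Proof. by apply/setP => j; rewrite !inE hs. Qed.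

Lemma prefix_step (l : seq 'I_N) r s2 : s = rcons l r ++ s2 ->
  [/\ r \notin l, r \notin Vb &
      forall x, owner x = r -> gain f (sel @: [set j in l]) x <= gain f (sel @: [set j in l]) (sel r)].
Proof.
move=> e. have e' : s = l ++ r :: s2 by rewrite e cat_rcons.
have rl : r \notin l.
  move: us; rewrite e' cat_uniq => /and3P[_ hh _].
  apply: contra hh => rl; apply/hasP; exists r => //; by rewrite in_cons eqxx.
have rV : r \notin Vb by rewrite -hs e' mem_cat in_cons eqxx orbT.
split => // x ox. have /= H := hg e'. apply: H; by rewrite ox.
Qed.

Lemma greedy_tc (beta : R) : 0 < beta ->
  (forall x (Y Y' : {set T}), x \notin Y -> x \notin Y' -> beta * gain f Y' x <= gain f Y x) ->
  beta * f (O @: ~: Vb) <= f (sel @: ~: Vb).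
Proof.
move=> b0 hT.
suff H : forall s1 s2, s = s1 ++ s2 -> beta * f (O @: [set j in s1]) <= f (sel @: [set j in s1]).
  by have := H s [::] (esym (cats0 s)); rewrite set_s.
elim/last_ind => [|l r IH] s2 e.
  have -> : [set j in [::] : seq 'I_N] = set0 by apply/setP => j; rewrite !inE.
  by rewrite !imset0 f0 mulr0.
have [rl rV hgr] := prefix_step e.
have e2 : s = l ++ r :: s2 by rewrite e cat_rcons.
have := IH (r :: s2) e2.
rewrite set_rcons !imsetU1 !gainE.
set L := [set j in l].
have oP : O r \notin sel @: L.
  by apply/negP => /(owner_img hsel); rewrite hO inE; apply/negP.
have oQ : O r \notin O @: L.
  by apply/negP => /(owner_img hO); rewrite hO inE; apply/negP.
have h1 := hT _ _ _ oP oQ.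
have h2 := hgr (O r) (hO r).
move=> IHl. rewrite mulrDr. lra.
Qed.


Lemma greedy_sub (k : R) : 0 <= k -> k <= 1 -> submodular f ->
  (forall (Z : {set T}) y, y \notin Z -> (1 - k) * f [set y] <= gain f Z y) ->
  f (O @: ~: Vb) <= (1 + k) * f (sel @: ~: Vb).
Proof.
move=> k0 k1 fsub hK.
set P := sel @: ~: Vb. set Q := O @: ~: Vb.
suff H : forall s1 s2, s = s1 ++ s2 ->
  f (P :|: O @: [set j in s1]) - f P - (f (Q :|: sel @: [set j in s1]) - f Q)
    <= k * f (sel @: [set j in s1]).
  have := H s [::] (esym (cats0 s)). rewrite set_s -/P -/Q [Q :|: P]setUC. lra.
elim/last_ind => [|l r IH] s2 e.
  have -> : [set j in [::] : seq 'I_N] = set0 by apply/setP => j; rewrite !inE.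
  rewrite !imset0 !setU0 f0 mulr0. lra.
have [rl rV hgr] := prefix_step e.
have e2 : s = l ++ r :: s2 by rewrite e cat_rcons.
have IHl := IH (r :: s2) e2.
rewrite set_rcons !imsetU1 (setUCA P) (setUCA Q) !gainE.
set L := [set j in l].
set d := gain f (sel @: L) (sel r).
have d0 : 0 <= d by apply: gain_ge0.
have g2 : 0 <= gain f (Q :|: sel @: L) (sel r) by apply: gain_ge0.
suff hk : gain f (P :|: O @: L) (O r) - gain f (Q :|: sel @: L) (sel r) <= k * d.
  rewrite mulrDr. lra.
case: (eqVneq (O r) (sel r)) => eOs.
  have inP : O r \in P :|: O @: L.
    by rewrite inE eOs; apply/orP; left; apply: imset_f; rewrite inE.
  have eq1 : O r |: (P :|: O @: L) = P :|: O @: L by apply/setUidPr; rewrite sub1set.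
  have -> : gain f (P :|: O @: L) (O r) = 0 by rewrite /gain eq1 subrr. have := mulr_ge0 k0 d0. lra.
have hd1 : gain f (P :|: O @: L) (O r) <= d.
  apply: le_trans (hgr (O r) (hO r)).
  apply: fsub. apply: subsetU. apply/orP; left. apply: imsetS.
  apply/subsetP => j; rewrite !inE => jl. rewrite -hs. rewrite e mem_cat mem_rcons in_cons jl orbT //.
have nin : sel r \notin Q :|: sel @: L.
  rewrite inE negb_or. apply/andP; split.
    apply/negP => /imsetP[j _ ej]. have := congr1 owner ej. rewrite hsel hO => rj.
    by move: eOs; rewrite ej -rj eqxx.
  by apply/negP => /(owner_img hsel); rewrite hsel inE; apply/negP.
have hd2 := hK _ _ nin.
have hdw : d <= f [set sel r].
  have := fsub set0 (sel @: L) (sel r) (sub0set _).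
  by rewrite /d /gain setU0 f0 subr0.
have k1' : 0 <= 1 - k by lra.
have := ler_wpM2l k1' hdw. rewrite !mulrBl !mul1r in hd2 *. lra.
Qed.

End Greedy.


Section Fin.
Variables (R : realFieldType) (T : finType) (f : {set T} -> R).
Hypothesis f0 : normalized f.
Hypothesis fmono : nondecreasing_set f.
Hypothesis fnn : nonnegative_set f.

Lemma bigmin_le_idx (I : finType) (P : pred I) (F : I -> R) (x0 : R) :
  \big[Num.min/x0]_(j | P j) F j <= x0.
Proof.
apply: (big_rec (fun x => x <= x0)) => // i x _ hx.
by rewrite ge_min hx orbT.
Qed.

Lemma gain0 y : gain f set0 y = f [set y].
Proof. by rewrite /gain setU0 f0 subr0. Qed.

Lemma sub_setC1 (Y : {set T}) x : (Y \subset [set~ x]) = (x \notin Y).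
Proof.
apply/idP/idP.
  by move/subsetP => h; apply/negP => /h; rewrite !inE eqxx.
move=> xY; apply/subsetP => y yY; rewrite !inE; apply/negP => /eqP e.
by move: xY; rewrite -e yY.
Qed.

Definition tcmin : R := \big[Num.min/1]_(x : T)
        \big[Num.min/1]_(Y : {set T} | Y \subset [set~ x])
          \big[Num.min/1]_(Y' : {set T} | (Y' \subset [set~ x])
                                        && (gain f Y' x != 0))
             (gain f Y x / gain f Y' x).

Lemma tc_eq : 1 - total_curvature f = tcmin.
Proof. rewrite /total_curvature /tcmin. by rewrite opprB addrC subrK. Qed.

Lemma tcmin_le1 : tcmin <= 1.
Proof. exact: bigmin_le_idx. Qed.

Lemma tcmin_ge0 : 0 <= tcmin.
Proof.
apply: bigmin_glb => // x _. apply: bigmin_glb => // Y _. apply: bigmin_glb => // Y' _.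
apply: divr_ge0; exact: gain_ge0.
Qed.

Lemma tc_gain x (Y Y' : {set T}) : x \notin Y -> x \notin Y' ->
  tcmin * gain f Y' x <= gain f Y x.
Proof.
move=> xY xY'.
case: (eqVneq (gain f Y' x) 0) => [->|g0]; first by rewrite mulr0 gain_ge0.
have gp : 0 < gain f Y' x by rewrite lt0r g0 gain_ge0.
have h : tcmin <= gain f Y x / gain f Y' x.
  rewrite /tcmin (bigD1 x) //= ge_min; apply/orP; left.
  rewrite (bigD1 Y) /=; last by rewrite sub_setC1.
  rewrite ge_min; apply/orP; left.
  rewrite (bigD1 Y') /=; last by rewrite sub_setC1 xY' g0.
  by rewrite ge_min lexx.
by rewrite -(ler_pdivlMr _ _ gp).
Qed.


Definition cmin : R := \big[Num.min/1]_(x : T | f [set x] != 0)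
        ((f [set: T] - f ([set: T] :\ x)) / f [set x]).

Lemma cv_eq : 1 - curvature f = cmin.
Proof. rewrite /curvature /cmin. by rewrite opprB addrC subrK. Qed.

Lemma cmin_le1 : cmin <= 1.
Proof. exact: bigmin_le_idx. Qed.

Lemma cmin_ge0 : 0 <= cmin.
Proof.
apply: bigmin_glb => // x _. apply: divr_ge0 => //.
by rewrite subr_ge0; apply: fmono; apply: subsetT.
Qed.

Lemma cv_gain (fsub : submodular f) (Z : {set T}) y : y \notin Z ->
  cmin * f [set y] <= gain f Z y.
Proof.
move=> yZ.
case: (eqVneq (f [set y]) 0) => [->|w0]; first by rewrite mulr0 gain_ge0.
have wp : 0 < f [set y] by rewrite lt0r w0 fnn.
have h : cmin <= (f [set: T] - f ([set: T] :\ y)) / f [set y].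
  by rewrite /cmin (bigD1 y) //= ge_min lexx.
have h2 : cmin * f [set y] <= f [set: T] - f ([set: T] :\ y).
  by rewrite -(ler_pdivlMr _ _ wp).
apply: le_trans h2 _.
have -> : f [set: T] - f ([set: T] :\ y) = gain f ([set: T] :\ y) y.
  by rewrite /gain setD1K // inE.
apply: fsub. apply/subsetP => z zZ. rewrite !inE andbT. apply/negP => /eqP ez.
by move: yZ; rewrite -ez zZ.
Qed.

End Fin.

Section MB.
Variable R : realFieldType.

Lemma mb_ge0 (a b : R) n : 0 <= a -> 0 <= b -> 0 <= min_bound a b n.
Proof.
move=> a0 b0; rewrite /min_bound; case: eqP => // _.
by rewrite le_min a0 divr_ge0.
Qed.

Lemma mb_le_a (a b : R) n : min_bound a b n <= a.
Proof. by rewrite /min_bound; case: eqP => // _; rewrite ge_min lexx. Qed.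

Lemma mb_n (a b : R) n : 0 <= a -> 0 <= b -> min_bound a b n * n%:R <= b.
Proof.
move=> a0 b0; rewrite /min_bound; case: eqP => [->|/eqP n0]; first by rewrite mulr0.
have np : 0 < (n%:R : R) by rewrite ltr0n lt0n.
rewrite -(ler_pdivlMr _ _ np). by rewrite ge_min lexx orbT.
Qed.

End MB.



End Aux.
Import Aux.
Local Open Scope ring_scope.

Theorem theorem1 (R : realFieldType) (N : nat) (T : finType)
  (owner : T -> 'I_N) (Phi : {set T} -> R) (alpha_s alpha_c : nat)
  (sel : {ffun 'I_N -> T}) (As : {set 'I_N}) (Ac : {set {set 'I_N}}) :
  (forall i : 'I_N, exists x : T, owner x = i) ->
  (alpha_s <= N)%N -> (alpha_c <= N * (N - 1) %/ 2)%N ->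
  RATT_output owner Phi alpha_s alpha_c sel ->
  admissible alpha_s alpha_c As Ac ->
  (forall As' Ac', admissible alpha_s alpha_c As' Ac' ->
     PhiSL Phi sel (~: As) (edges N :\: Ac)
       <= PhiSL Phi sel (~: As') (edges N :\: Ac')) ->
  normalized Phi -> nondecreasing_set Phi -> nonnegative_set Phi ->
  (min_bound ((1 - total_curvature Phi) ^+ 3) ((1 - total_curvature Phi) ^+ 2)
       (CAA N alpha_c) * opt_value owner Phi alpha_s alpha_c
     <= PhiSL Phi sel (~: As) (edges N :\: Ac))
  /\
  (submodular Phi ->
   min_bound ((1 - curvature Phi) / (1 + curvature Phi)) (1 - curvature Phi)
       (CAA N alpha_c) * opt_value owner Phi alpha_s alpha_c
     <= PhiSL Phi sel (~: As) (edges N :\: Ac)).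
Proof.
move=> hex has_s has_c hR hadm hworst f0 fmono fnn.
have hsel : forall i, owner (sel i) = i by case: hR.
have W0 : 0 <= PhiSL Phi sel (~: As) (edges N :\: Ac) by apply: bigmax_ge0.
split.
  rewrite tc_eq. set be := tcmin Phi.
  have be0 : 0 <= be by apply: tcmin_ge0.
  have be1 : be <= 1 by apply: tcmin_le1.
  case: (eqVneq be 0) => [->|ben0].
    have -> : min_bound (0 ^+ 3 : R) (0 ^+ 2) (CAA N alpha_c) = 0.
      rewrite /min_bound !expr0n /= mul0r. by case: (_ == _); rewrite ?minxx.
    by rewrite mul0r.
  have bep : 0 < be by rewrite lt0r ben0 be0.
  set ga := be^-1.
  have gap : 0 < ga by rewrite invr_gt0.
  have bega : be * ga = 1 by rewrite mulfV.
  apply: (core has_s has_c hR hadm f0 fmono fnn (lo:=be) (hi:=ga) (gam:=ga)).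
  - exact: be0.
  - have := ler_wpM2r (ltW gap) be1. rewrite bega mul1r => h. exact: le_trans be1 h.
  - exact: gap.
  - by apply: mb_ge0; apply: exprn_ge0.
  - have hb := mb_le_a (be ^+ 3) (be ^+ 2) (CAA N alpha_c).
    have e : be ^+ 3 * ga * ga = be by rewrite /ga; field.
    rewrite -[X in _ <= X]e. apply: ler_wpM2r; first exact: ltW.
    apply: ler_wpM2r => //; exact: ltW.
  - have hb := mb_n (CAA N alpha_c) (exprn_ge0 3 be0) (exprn_ge0 2 be0).
    have e : be ^+ 2 * ga = be by rewrite /ga; field.
    apply: le_trans be1. rewrite -[X in _ <= X]e mulrAC. apply: ler_wpM2r => //; exact: ltW.
  - move=> Z y yZ. have := tc_gain fmono (Y := Z) (Y' := set0) yZ (negbT (in_set0 y)).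
    by rewrite gain0.
  - move=> Z y yZ. have := tc_gain fmono (Y := set0) (Y' := Z) (negbT (in_set0 y)) yZ.
    rewrite gain0 // => h. have := ler_wpM2l (ltW gap) h.
    by rewrite mulrA [ga * be]mulrC bega mul1r.
  - move=> Vb s us hs hg O hO.
    have := greedy_tc f0 hsel hO us hs hg bep (fun x Y Y' h1 h2 => tc_gain fmono h1 h2).
    move=> h. have := ler_wpM2l (ltW gap) h.
    by rewrite mulrA [ga * be]mulrC bega mul1r.
move=> fsub.
have hk : curvature Phi = 1 - cmin Phi by rewrite -cv_eq opprB addrC subrK.
rewrite hk opprB addrC subrK. set ka := cmin Phi.
have ka0 : 0 <= ka by apply: cmin_ge0.
have ka1 : ka <= 1 by apply: cmin_le1.
have dp : 0 < 1 + (1 - ka) by lra.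
apply: (core has_s has_c hR hadm f0 fmono fnn (lo:=ka) (hi:=1) (gam:=1 + (1 - ka))).
- exact: ka0.
- exact: ka1.
- exact: ltr01.
- apply: mb_ge0 => //. apply: divr_ge0 => //. exact: ltW.
- rewrite mulr1 -(ler_pdivlMr _ _ dp). exact: mb_le_a.
- rewrite mulr1. apply: le_trans ka1. apply: mb_n => //. apply: divr_ge0 => //; exact: ltW.
- move=> Z y yZ. exact: cv_gain.
- move=> Z y yZ. rewrite mul1r -(gain0 f0). exact: fsub (sub0set Z).
- move=> Vb s us hs hg O hO.
  apply: (greedy_sub f0 fmono hsel hO us hs hg) => //.
  + lra.
  + lra.
  + move=> Z y yZ. rewrite opprB addrC subrK. exact: cv_gain.
Qed.
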